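(* The connected subgraph arrangements of the following two graphs are not factored: (1) the almost path graph $A_{3,2}$ (the star with central vertex $2$ and leaves $1,3,4$); (2) the cycle graph $C_4$.
   Context: For a finite simple graph $G=(N,E)$ with $N=\{1,\dots,n\}$ and $I\subseteq N$, $G[I]$ denotes the induced subgraph on $I$, and $H_I=\ker\big(\sum_{i\in I}x_i\big)$, where $x_1,\dots,x_n$ are the coordinate functions. The connected subgraph arrangement of $G$ is $\mathcal{A}_G=\{H_I:\emptyset\neq I\subseteq N,\ G[I]\text{ connected}\}$ over $\mathbb{Q}$. $A_{3,2}$ has vertices $1,2,3,4$ and edges $\{1,2\},\{2,3\},\{2,4\}$; $C_4$ has vertices $1,2,3,4$ and edges $\{1,2\},\{2,3\},\{3,4\},\{1,4\}$. A partition $\pi=(\pi_1,\dots,\pi_s)$ of an arrangement $\mathcal{A}$ is nice if (i) for every choice $H_i\in\pi_i$ the $s$ defining forms are linearly independent, and (ii) for every $X\in L(\mathcal{A})\setminus\{V\}$ the induced partition of $\mathcal{A}_X=\{H\in\mathcal{A}:X\subseteq H\}$ into the nonempty sets $\pi_i\cap\mathcal{A}_X$ has a singleton block. $\mathcal{A}$ is factored if it admits a nice partition. *)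

(* Defs.v *)
From HB Require Import structures.
From mathcomp Require Import all_boot all_order all_algebra.
Set Implicit Arguments. Unset Strict Implicit. Unset Printing Implicit Defensive.
Import Order.TTheory GRing.Theory Num.Theory.
Local Open Scope ring_scope.

(* A finite simple graph on vertex set 'I_n (vertex k+1 of the paper is the
   ordinal k) is given by a symmetric irreflexive relation e. *)
Definition simple_graph (n : nat) (e : rel 'I_n) : Prop :=
  irreflexive e /\ symmetric e.

Definition induced_connected (n : nat) (e : rel 'I_n) (I : {set 'I_n}) : bool :=
  (I != set0) &&
  [forall x in I, forall y in I,
     connect [rel a b | [&& a \in I, b \in I & e a b]] x y].

Notation V n := 'rV[rat]_n.

(* defining form of H_I : sum_{i in I} x_i, as a row vector *)
Definition form (n : nat) (I : {set 'I_n}) : V n := \row_i (i \in I)%:R.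

Definition hyp (n : nat) (I : {set 'I_n}) : pred (V n) :=
  [pred v : V n | (\sum_(i in I) v ord0 i) == 0].

(* The connected subgraph arrangement, indexed by the subsets I labelling
   its hyperplanes H_I (the map I |-> H_I is injective). *)
Definition csa (n : nat) (e : rel 'I_n) : {set {set 'I_n}} :=
  [set I | induced_connected e I].

Definition flat (n : nat) (S : {set {set 'I_n}}) : pred (V n) :=
  [pred v : V n | [forall I in S, v \in hyp I]].

Definition in_loc (n : nat) (A S : {set {set 'I_n}}) (J : {set 'I_n}) : Prop :=
  J \in A /\ (forall v : V n, v \in flat S -> v \in hyp J).

Definition nice_partition (n : nat) (A : {set {set 'I_n}})
    (pi : {set {set {set 'I_n}}}) : Prop :=
  partition pi A /\
  (forall sel : {set {set 'I_n}} -> {set 'I_n},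
     (forall B, B \in pi -> sel B \in B) ->
     free [seq form (sel B) | B <- enum pi]) /\
  (* (ii) every X in L(A) \ {V} : induced partition of A_X has a singleton block *)
  (forall S : {set {set 'I_n}}, S \subset A ->
     (exists v : V n, v \notin flat S) ->
     exists2 B, B \in pi &
       exists J, [/\ J \in B, in_loc A S J &
                   forall K, K \in B -> in_loc A S K -> K = J]).

Definition factored (n : nat) (A : {set {set 'I_n}}) : Prop :=
  exists pi, nice_partition A pi.

Definition graph_of (n : nat) (E : seq (nat * nat)) : rel 'I_n :=
  [rel x y | ((val x, val y) \in E) || ((val y, val x) \in E)].

(* A_{3,2}: vertices 1..4 (= 0..3), edges {1,2},{2,3},{2,4} *)
Definition A32 : rel 'I_4 := @graph_of 4%N [:: (0,1); (1,2); (1,3)]%N.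
Definition C4 : rel 'I_4 := @graph_of 4%N [:: (0,1); (1,2); (2,3); (0,3)]%N.

(* Main.v *)
Require Import Defs.
From HB Require Import structures.
From mathcomp Require Import all_boot all_order all_algebra.
Set Implicit Arguments. Unset Strict Implicit. Unset Printing Implicit Defensive.
Import Order.TTheory GRing.Theory Num.Theory.
Local Open Scope ring_scope.


Definition bit (m i : nat) : bool := odd (m %/ 2 ^ i).
Definition ofm (m : nat) : {set 'I_4} := [set i : 'I_4 | bit m i].
Definition o0 : 'I_4 := @Ordinal 4 0 isT.
Definition o1 : 'I_4 := @Ordinal 4 1 isT.
Definition o2 : 'I_4 := @Ordinal 4 2 isT.
Definition o3 : 'I_4 := @Ordinal 4 3 isT.
Definition mof (J : {set 'I_4}) : nat :=
  ((o0 \in J) + 2 * (o1 \in J) + 4 * (o2 \in J) + 8 * (o3 \in J))%N.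

Lemma mofK m : (m < 16)%N -> mof (ofm m) = m.
Proof.
rewrite /mof !inE /bit /=.
by do 16! (case: m => [|m] //).
Qed.

Lemma ofmK J : ofm (mof J) = J.
Proof.
apply/setP => i; rewrite inE /mof.
case: i => [[|[|[|[|i]]]] Hi] //.
- have -> : Ordinal Hi = o0 by apply: val_inj.
  by case: (o0 \in J); case: (o1 \in J); case: (o2 \in J); case: (o3 \in J).
- have -> : Ordinal Hi = o1 by apply: val_inj.
  by case: (o0 \in J); case: (o1 \in J); case: (o2 \in J); case: (o3 \in J).
- have -> : Ordinal Hi = o2 by apply: val_inj.
  by case: (o0 \in J); case: (o1 \in J); case: (o2 \in J); case: (o3 \in J).
- have -> : Ordinal Hi = o3 by apply: val_inj.
  by case: (o0 \in J); case: (o1 \in J); case: (o2 \in J); case: (o3 \in J).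
Qed.

Lemma mof_lt J : (mof J < 16)%N.
Proof. by rewrite /mof; case: (o0 \in J); case: (o1 \in J); case: (o2 \in J); case: (o3 \in J). Qed.

Definition msum (m : nat) (w : seq int) : int :=
  (if bit m 0 then nth 0 w 0 else 0) + (if bit m 1 then nth 0 w 1 else 0)
  + (if bit m 2 then nth 0 w 2 else 0) + (if bit m 3 then nth 0 w 3 else 0).

Definition ivec (w : seq int) : 'rV[rat]_4 := \row_i (nth 0 w i)%:~R.

Lemma hyp_ivec m w : (ivec w \in hyp (ofm m)) = (msum m w == 0).
Proof.
rewrite inE /= big_mkcond /= !big_ord_recl big_ord0 !inE !mxE /=.
rewrite -(@intr_eq0 rat) /msum !rmorphD /= addr0.
case: (bit m 0); case: (bit m 1); case: (bit m 2); case: (bit m 3); rewrite /bump /= ?rmorph0 ?addr0 ?add0r ?addrA.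
all: try done.
Qed.
Goal True. Abort.

Definition vals : seq int := [:: -1; 0; 1].
Definition testvecs : seq (seq int) :=
  foldr (fun _ acc => [seq x :: w | x <- vals, w <- acc]) [:: [::]] (iota 0 4).
Definition sepm (a b m : nat) : bool :=
  has (fun w => [&& msum a w == 0, msum b w == 0 & msum m w != 0]) testvecs.
Definition nzm (a : nat) : bool := has (fun w => msum a w != 0) testvecs.


Lemma flat2 a b w : msum a w == 0 -> msum b w == 0 -> ivec w \in flat [set ofm a; ofm b].
Proof.
move=> ha hb; rewrite inE /=; apply/forallP => I; apply/implyP.
by rewrite !inE => /orP [/eqP->|/eqP->]; [move: ha | move: hb]; rewrite -hyp_ivec inE.
Qed.

Lemma core (A : {set {set 'I_4}}) pi (bad : pred nat) (a b : nat) (extra : seq nat) :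
  nice_partition A pi ->
  (forall m, bad m -> ofm m \notin A) ->
  ofm a \in A -> ofm b \in A -> (a < 16)%N -> (b < 16)%N -> a != b -> nzm a ->
  all (fun m => [|| m \in extra, m == a, m == b, sepm a b m | bad m]) (iota 0 16) ->
  pblock pi (ofm a) = pblock pi (ofm b) ->
  exists2 j, j \in extra & pblock pi (ofm j) != pblock pi (ofm a).
Proof.
move=> [Hpart [Hfree Hloc]] Hbad Ha Hb a16 b16 nab Hnz Hchk E.
case/and3P: Hpart => /eqP covA triv nin0.
set S := [set ofm a; ofm b].
have SA : S \subset A by rewrite subUset !sub1set Ha Hb.
have nV : exists v, v \notin flat S.
  case/hasP: Hnz => w _ Hw; exists (ivec w); apply/negP.
  rewrite inE /= => /forallP /(_ (ofm a)).
  rewrite !inE eqxx /=; by move: Hw; rewrite -hyp_ivec inE => /negbTE ->.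
have [B Bpi [J [JB [JA Jloc] Juniq]]] := Hloc S SA nV.
have inlocS : forall K, K \in S -> in_loc A S K.
  move=> K KS; split; first by apply: (subsetP SA).
  by move=> v; rewrite inE /= => /forallP /(_ K); rewrite KS.
have PB : forall x, x \in B -> pblock pi x = B.
  by move=> x xB; apply: def_pblock.
have Ba : B != pblock pi (ofm a).
  apply/negP => /eqP EB.
  have aB : ofm a \in B by rewrite EB mem_pblock covA.
  have bB : ofm b \in B by rewrite EB E mem_pblock covA.
  have e1 : ofm a = J by apply: Juniq aB _; apply: inlocS; rewrite !inE eqxx.
  have e2 : ofm b = J by apply: Juniq bB _; apply: inlocS; rewrite !inE eqxx orbT.
  have : ofm a = ofm b by rewrite e1 e2.
  move/(congr1 mof); rewrite !mofK // => eab.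
  by rewrite eab eqxx in nab.
set j := mof J.
have Jj : J = ofm j by rewrite /j ofmK.
have := allP Hchk j; rewrite mem_iota /= mof_lt => /(_ isT).
case/orP => [jx|/orP [/eqP ja|/orP [/eqP jb|/orP [jsep|jbad]]]].
- by exists j => //; rewrite -Jj (PB _ JB).
- by move: Ba; rewrite -(PB _ JB) Jj ja eqxx.
- by move: Ba; rewrite -(PB _ JB) Jj jb E eqxx.
- case/hasP: jsep => w _ /and3P [h1 h2 h3].
  have := Jloc _ (flat2 h1 h2).
  by rewrite Jj hyp_ivec (negbTE h3).
- by move: (Hbad _ jbad); rewrite -Jj JA.
Qed.

Lemma form_dep a b c : all (fun i => nat_of_bool (bit c i) == bit a i + bit b i)%N (iota 0 4) ->
  Defs.form (ofm c) = Defs.form (ofm a) + Defs.form (ofm b).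
Proof.
move=> /allP H; apply/rowP => i; rewrite !mxE !inE.
have := H i; rewrite mem_iota /= ltn_ord => /(_ isT) /eqP ->.
by rewrite natrD.
Qed.

Lemma freel (A : {set {set 'I_4}}) pi a b c :
  nice_partition A pi -> ofm a \in A -> ofm b \in A -> ofm c \in A ->
  all (fun i => nat_of_bool (bit c i) == bit a i + bit b i)%N (iota 0 4) ->
  [|| pblock pi (ofm a) == pblock pi (ofm b), pblock pi (ofm a) == pblock pi (ofm c)
    | pblock pi (ofm b) == pblock pi (ofm c)].
Proof.
move=> [Hpart [Hfree _]] Ha Hb Hc Hdep.
case/and3P: Hpart => /eqP covA triv nin0.
apply/contraT; rewrite !negb_or => /and3P [nab nac nbc].
set Pa := pblock pi (ofm a); set Pb := pblock pi (ofm b); set Pc := pblock pi (ofm c).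
pose sel B := if B == Pa then ofm a else if B == Pb then ofm b
              else if B == Pc then ofm c else odflt set0 [pick x in B].
have selP : forall B, B \in pi -> sel B \in B.
  move=> B Bpi; rewrite /sel.
  case: eqP => [->|_]; first by rewrite mem_pblock covA.
  case: eqP => [->|_]; first by rewrite mem_pblock covA.
  case: eqP => [->|_]; first by rewrite mem_pblock covA.
  case: pickP => [x //|none].
  have : B != set0 by apply: contraNneq nin0 => <-.
  by case/set0Pn => x; rewrite none.
have Fr := Hfree sel selP.
have Pai : Pa \in enum pi by rewrite mem_enum pblock_mem // covA.
have Pbi : Pb \in enum pi by rewrite mem_enum pblock_mem // covA.
have Pci : Pc \in enum pi by rewrite mem_enum pblock_mem // covA.
have u0 := enum_uniq (mem pi).
have h1 := perm_to_rem Pci.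
have Pa1 : Pa \in rem Pc (enum pi) by rewrite mem_rem_uniq // inE Pai andbT.
have h2 := perm_to_rem Pa1.
have Pb2 : Pb \in rem Pa (rem Pc (enum pi)).
  rewrite mem_rem_uniq ?rem_uniq // inE mem_rem_uniq // inE Pbi andbT.
  by rewrite eq_sym nab nbc.
have h3 := perm_to_rem Pb2.
have hp : perm_eq (enum pi) (Pc :: Pa :: Pb :: rem Pb (rem Pa (rem Pc (enum pi)))).
  apply: (perm_trans h1); rewrite perm_cons; apply: (perm_trans h2); by rewrite perm_cons.
have := perm_map (fun B => Defs.form (sel B)) hp.
move/perm_free; rewrite Fr => /esym; rewrite map_cons free_cons => /andP [Hn _].
have sa : sel Pa = ofm a by rewrite /sel eqxx.
have sb : sel Pb = ofm b by rewrite /sel eq_sym (negbTE nab) eqxx.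
have sc : sel Pc = ofm c by rewrite /sel eq_sym (negbTE nac) eq_sym (negbTE nbc) eqxx.
move: Hn; rewrite /= sa sb sc (form_dep Hdep) => /negP H.
case: H.
by apply: memvD; apply: memv_span; rewrite !inE eqxx ?orbT.
Qed.


Lemma ord4_ind (P : 'I_4 -> Prop) : P o0 -> P o1 -> P o2 -> P o3 -> forall x, P x.
Proof.
move=> h0 h1 h2 h3 [[|[|[|[|x]]]] Hx] //.
- by have -> : Ordinal Hx = o0 by apply: val_inj.
- by have -> : Ordinal Hx = o1 by apply: val_inj.
- by have -> : Ordinal Hx = o2 by apply: val_inj.
- by have -> : Ordinal Hx = o3 by apply: val_inj.
Qed.

Lemma graph_of_sym n E : symmetric (@graph_of n E).
Proof. by move=> x y; rewrite /graph_of /= orbC. Qed.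

Lemma conn_center (e : rel 'I_4) (I : {set 'I_4}) c : symmetric e -> c \in I ->
  (forall x, x \in I -> connect [rel a b | [&& a \in I, b \in I & e a b]] c x) ->
  [forall x in I, forall y in I, connect [rel a b | [&& a \in I, b \in I & e a b]] x y].
Proof.
move=> sym cI H; apply/forallP => x; apply/implyP => xI; apply/forallP => y; apply/implyP => yI.
have sy : connect_sym [rel a b | [&& a \in I, b \in I & e a b]].
  apply: sym_connect_sym => a b /=; rewrite sym andbA (andbC (a \in I)) -andbA //.
by apply: connect_trans (H y yI); rewrite sy; apply: H.
Qed.

Ltac edge := apply/connect1; rewrite /= !inE; vm_compute; reflexivity.
Ltac cnode := first [ let H := fresh in move=> H; exfalso; move: H; rewrite inE; vm_compute; done
  | move=> _; first [ apply: connect0 | edge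
  | apply: (connect_trans (y := o0)); edge | apply: (connect_trans (y := o1)); edge
  | apply: (connect_trans (y := o2)); edge | apply: (connect_trans (y := o3)); edge ] ].

Lemma in_csa (E : seq (nat * nat)) m c : c \in ofm m ->
  (forall x, x \in ofm m -> connect [rel a b | [&& a \in ofm m, b \in ofm m & graph_of E a b]] c x) ->
  ofm m \in csa (@graph_of 4 E).
Proof.
move=> cI H; rewrite inE /induced_connected; apply/andP; split.
  by apply/set0Pn; exists c.
exact: conn_center (@graph_of_sym 4 E) cI H.
Qed.


Lemma notin_csa E m x y : x \in ofm m -> y \in ofm m -> x != y ->
  (forall u v, ~~ [&& u \in ofm m, v \in ofm m & @graph_of 4 E u v]) ->
  ofm m \notin csa (@graph_of 4 E).
Proof.
move=> xI yI nxy Hno; rewrite inE /induced_connected negb_and; apply/orP; right.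
apply/negP => /forallP /(_ x) /implyP /(_ xI) /forallP /(_ y) /implyP /(_ yI) C.
have cl : closed [rel a b | [&& a \in ofm m, b \in ofm m & @graph_of 4 E a b]] (pred1 x).
  by move=> u v h; have := Hno u v; rewrite /= in h; rewrite h.
by have := closed_connect cl C; rewrite !inE eqxx eq_sym (negbTE nxy).
Qed.

Lemma notin_csa0 E : ofm 0 \notin csa (@graph_of 4 E).
Proof.
rewrite inE /induced_connected negb_and negbK; apply/orP; left.
apply/eqP/setP; apply: ord4_ind; rewrite !inE; vm_compute; reflexivity.
Qed.

Lemma two E (bad : pred nat) pi a b :
  nice_partition (csa (@graph_of 4 E)) pi ->
  (forall m, bad m -> ofm m \notin csa (@graph_of 4 E)) ->
  ofm a \in csa (@graph_of 4 E) -> ofm b \in csa (@graph_of 4 E) ->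
  [&& (a < 16)%N, (b < 16)%N, a != b, nzm a &
     all (fun m => [|| m \in [::], m == a, m == b, sepm a b m | bad m]) (iota 0 16)] ->
  pblock pi (ofm a) != pblock pi (ofm b).
Proof.
move=> Hn Hb Ha Hb' /and5P [h1 h2 h3 h4 h5]; apply/negP => /eqP E'.
by have [j] := core Hn Hb Ha Hb' h1 h2 h3 h4 h5 E'.
Qed.

Lemma three E (bad : pred nat) pi a b c :
  nice_partition (csa (@graph_of 4 E)) pi ->
  (forall m, bad m -> ofm m \notin csa (@graph_of 4 E)) ->
  ofm a \in csa (@graph_of 4 E) -> ofm b \in csa (@graph_of 4 E) ->
  [&& (a < 16)%N, (b < 16)%N, a != b, nzm a &
     all (fun m => [|| m \in [:: c], m == a, m == b, sepm a b m | bad m]) (iota 0 16)] ->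
  ~~ ((pblock pi (ofm a) == pblock pi (ofm b)) && (pblock pi (ofm b) == pblock pi (ofm c))).
Proof.
move=> Hn Hb Ha Hb' /and5P [h1 h2 h3 h4 h5]; apply/negP => /andP [/eqP E1 /eqP E2].
have [j] := core Hn Hb Ha Hb' h1 h2 h3 h4 h5 E1.
by rewrite inE => /eqP ->; rewrite -E2 E1 eqxx.
Qed.

Ltac simp_hyps := repeat match goal with
 | H : is_true (~~ ((?x == ?x) && (?x == ?x))) |- _ => by rewrite eqxx in H
 | H : is_true (?x != ?x) |- _ => by rewrite eqxx in H
 | H : is_true ((?x == ?x) || _) |- _ => clear H
 | H : is_true (_ || ((?x == ?x) || _)) |- _ => clear H
 | H : is_true (_ || (_ || (?x == ?x))) |- _ => clear H
 | H : is_true (~~ ((?x == ?x) && ?b)) |- _ => rewrite eqxx /= in H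
 | H : is_true (~~ (?b && (?x == ?x))) |- _ => rewrite eqxx andbT in H
 end.

Ltac solve_eq := simp_hyps; lazymatch goal with
  | H : is_true ((?a == ?b) || ((?a == ?c) || (?b == ?c))) |- _ =>
     case/orP: H => [/eqP ?|/orP [/eqP ?|/eqP ?]]; subst; solve_eq
  end.

Local Open Scope nat_scope.

Definition badA32 : pred nat := fun m => m \in [:: 0; 5; 9; 12; 13].

Lemma badA32P m : badA32 m -> ofm m \notin csa A32.
Proof.
rewrite /A32 /badA32 => H; rewrite !inE in H; move: H => /orP [/eqP->|/orP [/eqP->|/orP [/eqP->|/orP [/eqP->|/eqP->]]]].
- exact: notin_csa0.
- apply: (notin_csa (x := o0) (y := o2)); [by rewrite inE; vm_compute | by rewrite inE; vm_compute | by [] | ].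
  apply: ord4_ind; apply: ord4_ind; rewrite !inE; vm_compute; reflexivity.
- apply: (notin_csa (x := o0) (y := o3)); [by rewrite inE; vm_compute | by rewrite inE; vm_compute | by [] | ].
  apply: ord4_ind; apply: ord4_ind; rewrite !inE; vm_compute; reflexivity.
- apply: (notin_csa (x := o2) (y := o3)); [by rewrite inE; vm_compute | by rewrite inE; vm_compute | by [] | ].
  apply: ord4_ind; apply: ord4_ind; rewrite !inE; vm_compute; reflexivity.
- apply: (notin_csa (x := o0) (y := o2)); [by rewrite inE; vm_compute | by rewrite inE; vm_compute | by [] | ].
  apply: ord4_ind; apply: ord4_ind; rewrite !inE; vm_compute; reflexivity.
Qed.

Lemma memA32 m : m \in [:: 1; 2; 3; 4; 6; 7; 8; 10; 11; 14; 15] -> ofm m \in csa A32.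
Proof.
rewrite /A32 => H; rewrite !inE in H; move: H => /orP [/eqP->|/orP [/eqP->|/orP [/eqP->|/orP [/eqP->|/orP [/eqP->|/orP [/eqP->|/orP [/eqP->|/orP [/eqP->|/orP [/eqP->|/orP [/eqP->|/eqP->]]]]]]]]]].
- apply: (in_csa (c := o0)); [by rewrite inE; vm_compute | apply: ord4_ind; cnode].
- apply: (in_csa (c := o1)); [by rewrite inE; vm_compute | apply: ord4_ind; cnode].
- apply: (in_csa (c := o0)); [by rewrite inE; vm_compute | apply: ord4_ind; cnode].
- apply: (in_csa (c := o2)); [by rewrite inE; vm_compute | apply: ord4_ind; cnode].
- apply: (in_csa (c := o1)); [by rewrite inE; vm_compute | apply: ord4_ind; cnode].
- apply: (in_csa (c := o0)); [by rewrite inE; vm_compute | apply: ord4_ind; cnode].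
- apply: (in_csa (c := o3)); [by rewrite inE; vm_compute | apply: ord4_ind; cnode].
- apply: (in_csa (c := o1)); [by rewrite inE; vm_compute | apply: ord4_ind; cnode].
- apply: (in_csa (c := o0)); [by rewrite inE; vm_compute | apply: ord4_ind; cnode].
- apply: (in_csa (c := o1)); [by rewrite inE; vm_compute | apply: ord4_ind; cnode].
- apply: (in_csa (c := o0)); [by rewrite inE; vm_compute | apply: ord4_ind; cnode].
Qed.

Lemma noA32 pi : nice_partition (csa A32) pi -> False.
Proof.
move=> Hn; have B := badA32P; have M := memA32.
have h_6_15 : pblock pi (ofm 6) != pblock pi (ofm 15) by apply: (two Hn B (M 6 isT) (M 15 isT)); vm_compute.
have h_3_10 : pblock pi (ofm 3) != pblock pi (ofm 10) by apply: (two Hn B (M 3 isT) (M 10 isT)); vm_compute.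
have h_11_14 : pblock pi (ofm 11) != pblock pi (ofm 14) by apply: (two Hn B (M 11 isT) (M 14 isT)); vm_compute.
have h_2_11 : pblock pi (ofm 2) != pblock pi (ofm 11) by apply: (two Hn B (M 2 isT) (M 11 isT)); vm_compute.
have h_2_14 : pblock pi (ofm 2) != pblock pi (ofm 14) by apply: (two Hn B (M 2 isT) (M 14 isT)); vm_compute.
have h_10_15 : pblock pi (ofm 10) != pblock pi (ofm 15) by apply: (two Hn B (M 10 isT) (M 15 isT)); vm_compute.
have h_6_11 : pblock pi (ofm 6) != pblock pi (ofm 11) by apply: (two Hn B (M 6 isT) (M 11 isT)); vm_compute.
have h_7_10 : pblock pi (ofm 7) != pblock pi (ofm 10) by apply: (two Hn B (M 7 isT) (M 10 isT)); vm_compute.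
have h_4_8 : pblock pi (ofm 4) != pblock pi (ofm 8) by apply: (two Hn B (M 4 isT) (M 8 isT)); vm_compute.
have h_3_6 : pblock pi (ofm 3) != pblock pi (ofm 6) by apply: (two Hn B (M 3 isT) (M 6 isT)); vm_compute.
have h_3_15 : pblock pi (ofm 3) != pblock pi (ofm 15) by apply: (two Hn B (M 3 isT) (M 15 isT)); vm_compute.
have h_2_7 : pblock pi (ofm 2) != pblock pi (ofm 7) by apply: (two Hn B (M 2 isT) (M 7 isT)); vm_compute.
have h_1_8 : pblock pi (ofm 1) != pblock pi (ofm 8) by apply: (two Hn B (M 1 isT) (M 8 isT)); vm_compute.
have h_6_10 : pblock pi (ofm 6) != pblock pi (ofm 10) by apply: (two Hn B (M 6 isT) (M 10 isT)); vm_compute.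
have h_7_14 : pblock pi (ofm 7) != pblock pi (ofm 14) by apply: (two Hn B (M 7 isT) (M 14 isT)); vm_compute.
have h_3_14 : pblock pi (ofm 3) != pblock pi (ofm 14) by apply: (two Hn B (M 3 isT) (M 14 isT)); vm_compute.
have h_1_4 : pblock pi (ofm 1) != pblock pi (ofm 4) by apply: (two Hn B (M 1 isT) (M 4 isT)); vm_compute.
have h_7_11 : pblock pi (ofm 7) != pblock pi (ofm 11) by apply: (two Hn B (M 7 isT) (M 11 isT)); vm_compute.
have h_2_15 : pblock pi (ofm 2) != pblock pi (ofm 15) by apply: (two Hn B (M 2 isT) (M 15 isT)); vm_compute.
have d_4_10_14 : [|| pblock pi (ofm 4) == pblock pi (ofm 10), pblock pi (ofm 4) == pblock pi (ofm 14) | pblock pi (ofm 10) == pblock pi (ofm 14)] by apply: (freel Hn (M 4 isT) (M 10 isT) (M 14 isT)); vm_compute.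
have n_4_10_14 : ~~ ((pblock pi (ofm 4) == pblock pi (ofm 10)) && (pblock pi (ofm 10) == pblock pi (ofm 14))) by apply: (three Hn B (M 4 isT) (M 10 isT)); vm_compute.
have d_3_4_7 : [|| pblock pi (ofm 3) == pblock pi (ofm 4), pblock pi (ofm 3) == pblock pi (ofm 7) | pblock pi (ofm 4) == pblock pi (ofm 7)] by apply: (freel Hn (M 3 isT) (M 4 isT) (M 7 isT)); vm_compute.
have n_3_4_7 : ~~ ((pblock pi (ofm 3) == pblock pi (ofm 4)) && (pblock pi (ofm 4) == pblock pi (ofm 7))) by apply: (three Hn B (M 3 isT) (M 4 isT)); vm_compute.
have d_4_11_15 : [|| pblock pi (ofm 4) == pblock pi (ofm 11), pblock pi (ofm 4) == pblock pi (ofm 15) | pblock pi (ofm 11) == pblock pi (ofm 15)] by apply: (freel Hn (M 4 isT) (M 11 isT) (M 15 isT)); vm_compute.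
have n_4_11_15 : ~~ ((pblock pi (ofm 4) == pblock pi (ofm 11)) && (pblock pi (ofm 11) == pblock pi (ofm 15))) by apply: (three Hn B (M 4 isT) (M 11 isT)); vm_compute.
have d_1_14_15 : [|| pblock pi (ofm 1) == pblock pi (ofm 14), pblock pi (ofm 1) == pblock pi (ofm 15) | pblock pi (ofm 14) == pblock pi (ofm 15)] by apply: (freel Hn (M 1 isT) (M 14 isT) (M 15 isT)); vm_compute.
have n_1_14_15 : ~~ ((pblock pi (ofm 1) == pblock pi (ofm 14)) && (pblock pi (ofm 14) == pblock pi (ofm 15))) by apply: (three Hn B (M 1 isT) (M 14 isT)); vm_compute.
have d_1_10_11 : [|| pblock pi (ofm 1) == pblock pi (ofm 10), pblock pi (ofm 1) == pblock pi (ofm 11) | pblock pi (ofm 10) == pblock pi (ofm 11)] by apply: (freel Hn (M 1 isT) (M 10 isT) (M 11 isT)); vm_compute.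
have n_1_10_11 : ~~ ((pblock pi (ofm 1) == pblock pi (ofm 10)) && (pblock pi (ofm 10) == pblock pi (ofm 11))) by apply: (three Hn B (M 1 isT) (M 10 isT)); vm_compute.
have d_7_8_15 : [|| pblock pi (ofm 7) == pblock pi (ofm 8), pblock pi (ofm 7) == pblock pi (ofm 15) | pblock pi (ofm 8) == pblock pi (ofm 15)] by apply: (freel Hn (M 7 isT) (M 8 isT) (M 15 isT)); vm_compute.
have n_7_8_15 : ~~ ((pblock pi (ofm 7) == pblock pi (ofm 8)) && (pblock pi (ofm 8) == pblock pi (ofm 15))) by apply: (three Hn B (M 7 isT) (M 8 isT)); vm_compute.
have d_2_8_10 : [|| pblock pi (ofm 2) == pblock pi (ofm 8), pblock pi (ofm 2) == pblock pi (ofm 10) | pblock pi (ofm 8) == pblock pi (ofm 10)] by apply: (freel Hn (M 2 isT) (M 8 isT) (M 10 isT)); vm_compute.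
have n_2_8_10 : ~~ ((pblock pi (ofm 2) == pblock pi (ofm 8)) && (pblock pi (ofm 8) == pblock pi (ofm 10))) by apply: (three Hn B (M 2 isT) (M 8 isT)); vm_compute.
have d_1_6_7 : [|| pblock pi (ofm 1) == pblock pi (ofm 6), pblock pi (ofm 1) == pblock pi (ofm 7) | pblock pi (ofm 6) == pblock pi (ofm 7)] by apply: (freel Hn (M 1 isT) (M 6 isT) (M 7 isT)); vm_compute.
have n_1_6_7 : ~~ ((pblock pi (ofm 1) == pblock pi (ofm 6)) && (pblock pi (ofm 6) == pblock pi (ofm 7))) by apply: (three Hn B (M 1 isT) (M 6 isT)); vm_compute.
have d_6_8_14 : [|| pblock pi (ofm 6) == pblock pi (ofm 8), pblock pi (ofm 6) == pblock pi (ofm 14) | pblock pi (ofm 8) == pblock pi (ofm 14)] by apply: (freel Hn (M 6 isT) (M 8 isT) (M 14 isT)); vm_compute.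
have n_6_8_14 : ~~ ((pblock pi (ofm 6) == pblock pi (ofm 8)) && (pblock pi (ofm 8) == pblock pi (ofm 14))) by apply: (three Hn B (M 6 isT) (M 8 isT)); vm_compute.
have d_1_2_3 : [|| pblock pi (ofm 1) == pblock pi (ofm 2), pblock pi (ofm 1) == pblock pi (ofm 3) | pblock pi (ofm 2) == pblock pi (ofm 3)] by apply: (freel Hn (M 1 isT) (M 2 isT) (M 3 isT)); vm_compute.
have n_1_2_3 : ~~ ((pblock pi (ofm 1) == pblock pi (ofm 2)) && (pblock pi (ofm 2) == pblock pi (ofm 3))) by apply: (three Hn B (M 1 isT) (M 2 isT)); vm_compute.
have d_2_4_6 : [|| pblock pi (ofm 2) == pblock pi (ofm 4), pblock pi (ofm 2) == pblock pi (ofm 6) | pblock pi (ofm 4) == pblock pi (ofm 6)] by apply: (freel Hn (M 2 isT) (M 4 isT) (M 6 isT)); vm_compute.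
have n_2_4_6 : ~~ ((pblock pi (ofm 2) == pblock pi (ofm 4)) && (pblock pi (ofm 4) == pblock pi (ofm 6))) by apply: (three Hn B (M 2 isT) (M 4 isT)); vm_compute.
have d_3_8_11 : [|| pblock pi (ofm 3) == pblock pi (ofm 8), pblock pi (ofm 3) == pblock pi (ofm 11) | pblock pi (ofm 8) == pblock pi (ofm 11)] by apply: (freel Hn (M 3 isT) (M 8 isT) (M 11 isT)); vm_compute.
have n_3_8_11 : ~~ ((pblock pi (ofm 3) == pblock pi (ofm 8)) && (pblock pi (ofm 8) == pblock pi (ofm 11))) by apply: (three Hn B (M 3 isT) (M 8 isT)); vm_compute.
clear B M Hn.
move: h_6_15 h_3_10 h_11_14 h_2_11 h_2_14 h_10_15 h_6_11 h_7_10 h_4_8 h_3_6 h_3_15 h_2_7 h_1_8 h_6_10 h_7_14 h_3_14 h_1_4 h_7_11 h_2_15 d_4_10_14 n_4_10_14 d_3_4_7 n_3_4_7 d_4_11_15 n_4_11_15 d_1_14_15 n_1_14_15 d_1_10_11 n_1_10_11 d_7_8_15 n_7_8_15 d_2_8_10 n_2_8_10 d_1_6_7 n_1_6_7 d_6_8_14 n_6_8_14 d_1_2_3 n_1_2_3 d_2_4_6 n_2_4_6 d_3_8_11 n_3_8_11.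
generalize (pblock pi (ofm 1)) (pblock pi (ofm 2)) (pblock pi (ofm 3)) (pblock pi (ofm 4)) (pblock pi (ofm 6)) (pblock pi (ofm 7)) (pblock pi (ofm 8)) (pblock pi (ofm 10)) (pblock pi (ofm 11)) (pblock pi (ofm 14)) (pblock pi (ofm 15)).
move=> x1 x2 x3 x4 x6 x7 x8 x10 x11 x14 x15; intros.
solve_eq.
Qed.

Definition badC4 : pred nat := fun m => m \in [:: 0; 5; 10].

Lemma badC4P m : badC4 m -> ofm m \notin csa C4.
Proof.
rewrite /C4 /badC4 => H; rewrite !inE in H; move: H => /orP [/eqP->|/orP [/eqP->|/eqP->]].
- exact: notin_csa0.
- apply: (notin_csa (x := o0) (y := o2)); [by rewrite inE; vm_compute | by rewrite inE; vm_compute | by [] | ].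
  apply: ord4_ind; apply: ord4_ind; rewrite !inE; vm_compute; reflexivity.
- apply: (notin_csa (x := o1) (y := o3)); [by rewrite inE; vm_compute | by rewrite inE; vm_compute | by [] | ].
  apply: ord4_ind; apply: ord4_ind; rewrite !inE; vm_compute; reflexivity.
Qed.

Lemma memC4 m : m \in [:: 1; 2; 3; 4; 6; 7; 8; 9; 11; 12; 13; 14; 15] -> ofm m \in csa C4.
Proof.
rewrite /C4 => H; rewrite !inE in H; move: H => /orP [/eqP->|/orP [/eqP->|/orP [/eqP->|/orP [/eqP->|/orP [/eqP->|/orP [/eqP->|/orP [/eqP->|/orP [/eqP->|/orP [/eqP->|/orP [/eqP->|/orP [/eqP->|/orP [/eqP->|/eqP->]]]]]]]]]]]].
- apply: (in_csa (c := o0)); [by rewrite inE; vm_compute | apply: ord4_ind; cnode].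
- apply: (in_csa (c := o1)); [by rewrite inE; vm_compute | apply: ord4_ind; cnode].
- apply: (in_csa (c := o0)); [by rewrite inE; vm_compute | apply: ord4_ind; cnode].
- apply: (in_csa (c := o2)); [by rewrite inE; vm_compute | apply: ord4_ind; cnode].
- apply: (in_csa (c := o1)); [by rewrite inE; vm_compute | apply: ord4_ind; cnode].
- apply: (in_csa (c := o0)); [by rewrite inE; vm_compute | apply: ord4_ind; cnode].
- apply: (in_csa (c := o3)); [by rewrite inE; vm_compute | apply: ord4_ind; cnode].
- apply: (in_csa (c := o0)); [by rewrite inE; vm_compute | apply: ord4_ind; cnode].
- apply: (in_csa (c := o0)); [by rewrite inE; vm_compute | apply: ord4_ind; cnode].
- apply: (in_csa (c := o2)); [by rewrite inE; vm_compute | apply: ord4_ind; cnode].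
- apply: (in_csa (c := o0)); [by rewrite inE; vm_compute | apply: ord4_ind; cnode].
- apply: (in_csa (c := o1)); [by rewrite inE; vm_compute | apply: ord4_ind; cnode].
- apply: (in_csa (c := o0)); [by rewrite inE; vm_compute | apply: ord4_ind; cnode].
Qed.

Lemma noC4 pi : nice_partition (csa C4) pi -> False.
Proof.
move=> Hn; have B := badC4P; have M := memC4.
have h_6_12 : pblock pi (ofm 6) != pblock pi (ofm 12) by apply: (two Hn B (M 6 isT) (M 12 isT)); vm_compute.
have h_3_13 : pblock pi (ofm 3) != pblock pi (ofm 13) by apply: (two Hn B (M 3 isT) (M 13 isT)); vm_compute.
have h_9_14 : pblock pi (ofm 9) != pblock pi (ofm 14) by apply: (two Hn B (M 9 isT) (M 14 isT)); vm_compute.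
have h_11_14 : pblock pi (ofm 11) != pblock pi (ofm 14) by apply: (two Hn B (M 11 isT) (M 14 isT)); vm_compute.
have h_2_8 : pblock pi (ofm 2) != pblock pi (ofm 8) by apply: (two Hn B (M 2 isT) (M 8 isT)); vm_compute.
have h_13_14 : pblock pi (ofm 13) != pblock pi (ofm 14) by apply: (two Hn B (M 13 isT) (M 14 isT)); vm_compute.
have h_6_11 : pblock pi (ofm 6) != pblock pi (ofm 11) by apply: (two Hn B (M 6 isT) (M 11 isT)); vm_compute.
have h_7_13 : pblock pi (ofm 7) != pblock pi (ofm 13) by apply: (two Hn B (M 7 isT) (M 13 isT)); vm_compute.
have h_3_9 : pblock pi (ofm 3) != pblock pi (ofm 9) by apply: (two Hn B (M 3 isT) (M 9 isT)); vm_compute.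
have h_3_6 : pblock pi (ofm 3) != pblock pi (ofm 6) by apply: (two Hn B (M 3 isT) (M 6 isT)); vm_compute.
have h_4_14 : pblock pi (ofm 4) != pblock pi (ofm 14) by apply: (two Hn B (M 4 isT) (M 14 isT)); vm_compute.
have h_2_7 : pblock pi (ofm 2) != pblock pi (ofm 7) by apply: (two Hn B (M 2 isT) (M 7 isT)); vm_compute.
have h_1_11 : pblock pi (ofm 1) != pblock pi (ofm 11) by apply: (two Hn B (M 1 isT) (M 11 isT)); vm_compute.
have h_11_13 : pblock pi (ofm 11) != pblock pi (ofm 13) by apply: (two Hn B (M 11 isT) (M 13 isT)); vm_compute.
have h_7_9 : pblock pi (ofm 7) != pblock pi (ofm 9) by apply: (two Hn B (M 7 isT) (M 9 isT)); vm_compute.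
have h_6_13 : pblock pi (ofm 6) != pblock pi (ofm 13) by apply: (two Hn B (M 6 isT) (M 13 isT)); vm_compute.
have h_7_12 : pblock pi (ofm 7) != pblock pi (ofm 12) by apply: (two Hn B (M 7 isT) (M 12 isT)); vm_compute.
have h_7_14 : pblock pi (ofm 7) != pblock pi (ofm 14) by apply: (two Hn B (M 7 isT) (M 14 isT)); vm_compute.
have h_3_14 : pblock pi (ofm 3) != pblock pi (ofm 14) by apply: (two Hn B (M 3 isT) (M 14 isT)); vm_compute.
have h_9_12 : pblock pi (ofm 9) != pblock pi (ofm 12) by apply: (two Hn B (M 9 isT) (M 12 isT)); vm_compute.
have h_1_4 : pblock pi (ofm 1) != pblock pi (ofm 4) by apply: (two Hn B (M 1 isT) (M 4 isT)); vm_compute.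
have h_7_11 : pblock pi (ofm 7) != pblock pi (ofm 11) by apply: (two Hn B (M 7 isT) (M 11 isT)); vm_compute.
have h_8_13 : pblock pi (ofm 8) != pblock pi (ofm 13) by apply: (two Hn B (M 8 isT) (M 13 isT)); vm_compute.
have h_11_12 : pblock pi (ofm 11) != pblock pi (ofm 12) by apply: (two Hn B (M 11 isT) (M 12 isT)); vm_compute.
have d_2_9_11 : [|| pblock pi (ofm 2) == pblock pi (ofm 9), pblock pi (ofm 2) == pblock pi (ofm 11) | pblock pi (ofm 9) == pblock pi (ofm 11)] by apply: (freel Hn (M 2 isT) (M 9 isT) (M 11 isT)); vm_compute.
have n_2_9_11 : ~~ ((pblock pi (ofm 2) == pblock pi (ofm 9)) && (pblock pi (ofm 9) == pblock pi (ofm 11))) by apply: (three Hn B (M 2 isT) (M 9 isT)); vm_compute.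
have d_4_9_13 : [|| pblock pi (ofm 4) == pblock pi (ofm 9), pblock pi (ofm 4) == pblock pi (ofm 13) | pblock pi (ofm 9) == pblock pi (ofm 13)] by apply: (freel Hn (M 4 isT) (M 9 isT) (M 13 isT)); vm_compute.
have n_4_9_13 : ~~ ((pblock pi (ofm 4) == pblock pi (ofm 9)) && (pblock pi (ofm 9) == pblock pi (ofm 13))) by apply: (three Hn B (M 4 isT) (M 9 isT)); vm_compute.
have d_6_9_15 : [|| pblock pi (ofm 6) == pblock pi (ofm 9), pblock pi (ofm 6) == pblock pi (ofm 15) | pblock pi (ofm 9) == pblock pi (ofm 15)] by apply: (freel Hn (M 6 isT) (M 9 isT) (M 15 isT)); vm_compute.
have n_6_9_15 : ~~ ((pblock pi (ofm 6) == pblock pi (ofm 9)) && (pblock pi (ofm 9) == pblock pi (ofm 15))) by apply: (three Hn B (M 6 isT) (M 9 isT)); vm_compute.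
have d_3_4_7 : [|| pblock pi (ofm 3) == pblock pi (ofm 4), pblock pi (ofm 3) == pblock pi (ofm 7) | pblock pi (ofm 4) == pblock pi (ofm 7)] by apply: (freel Hn (M 3 isT) (M 4 isT) (M 7 isT)); vm_compute.
have n_3_4_7 : ~~ ((pblock pi (ofm 3) == pblock pi (ofm 4)) && (pblock pi (ofm 4) == pblock pi (ofm 7))) by apply: (three Hn B (M 3 isT) (M 4 isT)); vm_compute.
have d_4_11_15 : [|| pblock pi (ofm 4) == pblock pi (ofm 11), pblock pi (ofm 4) == pblock pi (ofm 15) | pblock pi (ofm 11) == pblock pi (ofm 15)] by apply: (freel Hn (M 4 isT) (M 11 isT) (M 15 isT)); vm_compute.
have n_4_11_15 : ~~ ((pblock pi (ofm 4) == pblock pi (ofm 11)) && (pblock pi (ofm 11) == pblock pi (ofm 15))) by apply: (three Hn B (M 4 isT) (M 11 isT)); vm_compute.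
have d_1_14_15 : [|| pblock pi (ofm 1) == pblock pi (ofm 14), pblock pi (ofm 1) == pblock pi (ofm 15) | pblock pi (ofm 14) == pblock pi (ofm 15)] by apply: (freel Hn (M 1 isT) (M 14 isT) (M 15 isT)); vm_compute.
have n_1_14_15 : ~~ ((pblock pi (ofm 1) == pblock pi (ofm 14)) && (pblock pi (ofm 14) == pblock pi (ofm 15))) by apply: (three Hn B (M 1 isT) (M 14 isT)); vm_compute.
have d_7_8_15 : [|| pblock pi (ofm 7) == pblock pi (ofm 8), pblock pi (ofm 7) == pblock pi (ofm 15) | pblock pi (ofm 8) == pblock pi (ofm 15)] by apply: (freel Hn (M 7 isT) (M 8 isT) (M 15 isT)); vm_compute.
have n_7_8_15 : ~~ ((pblock pi (ofm 7) == pblock pi (ofm 8)) && (pblock pi (ofm 8) == pblock pi (ofm 15))) by apply: (three Hn B (M 7 isT) (M 8 isT)); vm_compute.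
have d_2_12_14 : [|| pblock pi (ofm 2) == pblock pi (ofm 12), pblock pi (ofm 2) == pblock pi (ofm 14) | pblock pi (ofm 12) == pblock pi (ofm 14)] by apply: (freel Hn (M 2 isT) (M 12 isT) (M 14 isT)); vm_compute.
have n_2_12_14 : ~~ ((pblock pi (ofm 2) == pblock pi (ofm 12)) && (pblock pi (ofm 12) == pblock pi (ofm 14))) by apply: (three Hn B (M 2 isT) (M 12 isT)); vm_compute.
have d_1_6_7 : [|| pblock pi (ofm 1) == pblock pi (ofm 6), pblock pi (ofm 1) == pblock pi (ofm 7) | pblock pi (ofm 6) == pblock pi (ofm 7)] by apply: (freel Hn (M 1 isT) (M 6 isT) (M 7 isT)); vm_compute.
have n_1_6_7 : ~~ ((pblock pi (ofm 1) == pblock pi (ofm 6)) && (pblock pi (ofm 6) == pblock pi (ofm 7))) by apply: (three Hn B (M 1 isT) (M 6 isT)); vm_compute.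
have d_4_8_12 : [|| pblock pi (ofm 4) == pblock pi (ofm 8), pblock pi (ofm 4) == pblock pi (ofm 12) | pblock pi (ofm 8) == pblock pi (ofm 12)] by apply: (freel Hn (M 4 isT) (M 8 isT) (M 12 isT)); vm_compute.
have n_4_8_12 : ~~ ((pblock pi (ofm 4) == pblock pi (ofm 8)) && (pblock pi (ofm 8) == pblock pi (ofm 12))) by apply: (three Hn B (M 4 isT) (M 8 isT)); vm_compute.
have d_6_8_14 : [|| pblock pi (ofm 6) == pblock pi (ofm 8), pblock pi (ofm 6) == pblock pi (ofm 14) | pblock pi (ofm 8) == pblock pi (ofm 14)] by apply: (freel Hn (M 6 isT) (M 8 isT) (M 14 isT)); vm_compute.
have n_6_8_14 : ~~ ((pblock pi (ofm 6) == pblock pi (ofm 8)) && (pblock pi (ofm 8) == pblock pi (ofm 14))) by apply: (three Hn B (M 6 isT) (M 8 isT)); vm_compute.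
have d_2_13_15 : [|| pblock pi (ofm 2) == pblock pi (ofm 13), pblock pi (ofm 2) == pblock pi (ofm 15) | pblock pi (ofm 13) == pblock pi (ofm 15)] by apply: (freel Hn (M 2 isT) (M 13 isT) (M 15 isT)); vm_compute.
have n_2_13_15 : ~~ ((pblock pi (ofm 2) == pblock pi (ofm 13)) && (pblock pi (ofm 13) == pblock pi (ofm 15))) by apply: (three Hn B (M 2 isT) (M 13 isT)); vm_compute.
have d_1_2_3 : [|| pblock pi (ofm 1) == pblock pi (ofm 2), pblock pi (ofm 1) == pblock pi (ofm 3) | pblock pi (ofm 2) == pblock pi (ofm 3)] by apply: (freel Hn (M 1 isT) (M 2 isT) (M 3 isT)); vm_compute.
have n_1_2_3 : ~~ ((pblock pi (ofm 1) == pblock pi (ofm 2)) && (pblock pi (ofm 2) == pblock pi (ofm 3))) by apply: (three Hn B (M 1 isT) (M 2 isT)); vm_compute.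
have d_1_12_13 : [|| pblock pi (ofm 1) == pblock pi (ofm 12), pblock pi (ofm 1) == pblock pi (ofm 13) | pblock pi (ofm 12) == pblock pi (ofm 13)] by apply: (freel Hn (M 1 isT) (M 12 isT) (M 13 isT)); vm_compute.
have n_1_12_13 : ~~ ((pblock pi (ofm 1) == pblock pi (ofm 12)) && (pblock pi (ofm 12) == pblock pi (ofm 13))) by apply: (three Hn B (M 1 isT) (M 12 isT)); vm_compute.
have d_3_12_15 : [|| pblock pi (ofm 3) == pblock pi (ofm 12), pblock pi (ofm 3) == pblock pi (ofm 15) | pblock pi (ofm 12) == pblock pi (ofm 15)] by apply: (freel Hn (M 3 isT) (M 12 isT) (M 15 isT)); vm_compute.
have n_3_12_15 : ~~ ((pblock pi (ofm 3) == pblock pi (ofm 12)) && (pblock pi (ofm 12) == pblock pi (ofm 15))) by apply: (three Hn B (M 3 isT) (M 12 isT)); vm_compute.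
have d_2_4_6 : [|| pblock pi (ofm 2) == pblock pi (ofm 4), pblock pi (ofm 2) == pblock pi (ofm 6) | pblock pi (ofm 4) == pblock pi (ofm 6)] by apply: (freel Hn (M 2 isT) (M 4 isT) (M 6 isT)); vm_compute.
have n_2_4_6 : ~~ ((pblock pi (ofm 2) == pblock pi (ofm 4)) && (pblock pi (ofm 4) == pblock pi (ofm 6))) by apply: (three Hn B (M 2 isT) (M 4 isT)); vm_compute.
have d_1_8_9 : [|| pblock pi (ofm 1) == pblock pi (ofm 8), pblock pi (ofm 1) == pblock pi (ofm 9) | pblock pi (ofm 8) == pblock pi (ofm 9)] by apply: (freel Hn (M 1 isT) (M 8 isT) (M 9 isT)); vm_compute.
have n_1_8_9 : ~~ ((pblock pi (ofm 1) == pblock pi (ofm 8)) && (pblock pi (ofm 8) == pblock pi (ofm 9))) by apply: (three Hn B (M 1 isT) (M 8 isT)); vm_compute.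
have d_3_8_11 : [|| pblock pi (ofm 3) == pblock pi (ofm 8), pblock pi (ofm 3) == pblock pi (ofm 11) | pblock pi (ofm 8) == pblock pi (ofm 11)] by apply: (freel Hn (M 3 isT) (M 8 isT) (M 11 isT)); vm_compute.
have n_3_8_11 : ~~ ((pblock pi (ofm 3) == pblock pi (ofm 8)) && (pblock pi (ofm 8) == pblock pi (ofm 11))) by apply: (three Hn B (M 3 isT) (M 8 isT)); vm_compute.
clear B M Hn.
move: h_6_12 h_3_13 h_9_14 h_11_14 h_2_8 h_13_14 h_6_11 h_7_13 h_3_9 h_3_6 h_4_14 h_2_7 h_1_11 h_11_13 h_7_9 h_6_13 h_7_12 h_7_14 h_3_14 h_9_12 h_1_4 h_7_11 h_8_13 h_11_12 d_2_9_11 n_2_9_11 d_4_9_13 n_4_9_13 d_6_9_15 n_6_9_15 d_3_4_7 n_3_4_7 d_4_11_15 n_4_11_15 d_1_14_15 n_1_14_15 d_7_8_15 n_7_8_15 d_2_12_14 n_2_12_14 d_1_6_7 n_1_6_7 d_4_8_12 n_4_8_12 d_6_8_14 n_6_8_14 d_2_13_15 n_2_13_15 d_1_2_3 n_1_2_3 d_1_12_13 n_1_12_13 d_3_12_15 n_3_12_15 d_2_4_6 n_2_4_6 d_1_8_9 n_1_8_9 d_3_8_11 n_3_8_11.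
generalize (pblock pi (ofm 1)) (pblock pi (ofm 2)) (pblock pi (ofm 3)) (pblock pi (ofm 4)) (pblock pi (ofm 6)) (pblock pi (ofm 7)) (pblock pi (ofm 8)) (pblock pi (ofm 9)) (pblock pi (ofm 11)) (pblock pi (ofm 12)) (pblock pi (ofm 13)) (pblock pi (ofm 14)) (pblock pi (ofm 15)).
move=> x1 x2 x3 x4 x6 x7 x8 x9 x11 x12 x13 x14 x15; intros.
solve_eq.
Qed.

Theorem proposition8p8 :
  ~ factored (csa A32) /\ ~ factored (csa C4).
Proof.
by split; move=> [pi Hn]; [exact: (noA32 Hn) | exact: (noC4 Hn)].
Qed.
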